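(* Let $\beta_1,\dots,\beta_N\in\mathbb R$ satisfy $(d-1)\sum_i\beta_i^2+(\sum_i\beta_i)^2=1$. Then for every $1\le i\le N$: (i) $\widetilde C_\beta\,\big(\omega_{(0,i)}\otimes I^{\otimes(N-1)}\big)=\frac1{(N-1)!}\sum_{a=1}^N\sum_{\sigma\in\Sigma_{a,i}}\beta_a\big((d-1)\beta_i+\sum_{b=1}^N\beta_b\big)\Pi_\sigma^\Gamma$; (ii) $\mathrm{Tr}\big[C_\beta\,(\omega_{(0,i)}\otimes I^{\otimes(N-1)})\big]=d\big((d-1)\beta_i+\sum_{j=1}^N\beta_j\big)^2$.
   Context: Fix $d\ge2$, $N\ge1$. Let $|\Omega\rangle=\sum_{i=1}^d|i\rangle\otimes|i\rangle$, $\omega=|\Omega\rangle\langle\Omega|$; tensor factors of $(\mathbb C^d)^{\otimes(N+1)}$ are labelled $0,\dots,N$ and $\omega_{(0,i)}\otimes I^{\otimes(N-1)}$ acts as $\omega$ on factors $0,i$ and identity elsewhere. For a permutation $\sigma$ of $\{0,\dots,N\}$, $\Pi_\sigma(v_0\otimes\cdots\otimes v_N)=v_{\sigma^{-1}(0)}\otimes\cdots\otimes v_{\sigma^{-1}(N)}$, $\Pi_\sigma^\Gamma$ is its partial transpose on factor $0$, and $\Sigma_{a,b}=\{\sigma:\sigma(0)=a,\sigma(b)=0\}$. $\widetilde C_\beta=\sum_{1\le a,b\le N}\sum_{\sigma\in\Sigma_{a,b}}\frac{\beta_a\beta_b}{(N-1)!}\Pi_\sigma^\Gamma$ and $C_\beta=\frac{d}{\binom{N+d-1}{N}}\frac{N+d-1}{N}\widetilde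 C_\beta$. *)

(* Defs.v *)
(* Operators on (C^d)^{\otimes (N+1)} are represented by their
   matrix entries in the computational basis: a basis vector is a tuple
   x : {ffun 'I_N.+1 -> 'I_d} (factor k carries basis index x k), and an
   operator is a function  op := basis -> basis -> R  (entry <y| A |x>). *)
From HB Require Import structures.
From mathcomp Require Import all_boot all_order all_algebra all_fingroup.
Set Implicit Arguments. Unset Strict Implicit. Unset Printing Implicit Defensive.
Import Order.TTheory GRing.Theory Num.Theory.
Local Open Scope ring_scope.

Definition basis (d N : nat) := {ffun 'I_N.+1 -> 'I_d}.
Definition op (R : Type) (d N : nat) := basis d N -> basis d N -> R.

(* tensor factor i (1 <= i <= N) for i : 'I_N, i.e. factor i.+1 *)
Definition fac (N : nat) (i : 'I_N) : 'I_N.+1 := lift ord0 i.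

Section Ops.
Variables (R : fieldType) (d N : nat).

Definition opmul (A B : op R d N) : op R d N :=
  fun y x => \sum_(z : basis d N) A y z * B z x.

Definition optr (A : op R d N) : R := \sum_(x : basis d N) A x x.

(* Pi_sigma (v_0 (x) ... (x) v_N) = v_{s^-1 0} (x) ... (x) v_{s^-1 N};
   on basis vectors Pi_s e_x = e_y with y k = x (s^-1 k), i.e. y (s k) = x k. *)
Definition Pi (s : {perm 'I_N.+1}) : op R d N :=
  fun y x => if [forall k, y (s k) == x k] then 1 else 0.

(* partial transpose on factor 0: <y|A^Gamma|x> = <y'|A|x'> where y' = y with
   factor 0 replaced by x 0 and x' = x with factor 0 replaced by y 0. *)
Definition set_fac0 (x : basis d N) (c : 'I_d) : basis d N :=
  [ffun k => if k == ord0 then c else x k].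

Definition PiG (s : {perm 'I_N.+1}) : op R d N :=
  fun y x => Pi s (set_fac0 y (x ord0)) (set_fac0 x (y ord0)).

(* omega = |Omega><Omega| with |Omega> = sum_j |j>|j>, acting on factors 0 and
   i, identity elsewhere *)
Definition omega0 (i : 'I_N.+1) : op R d N :=
  fun y x => if [&& y ord0 == y i, x ord0 == x i &
                 [forall k, (k != ord0) && (k != i) ==> (y k == x k)]]
             then 1 else 0.

Definition inSigma (s : {perm 'I_N.+1}) (a b : 'I_N.+1) : bool :=
  (s ord0 == a) && (s b == ord0).

(* beta a  stands for beta_{a+1} *)
Definition Ctilde (beta : 'I_N -> R) : op R d N :=
  fun y x => \sum_(a < N) \sum_(b < N)
     \sum_(s : {perm 'I_N.+1} | inSigma s (fac a) (fac b))
        (beta a * beta b / (N.-1)`!%:R) * PiG s y x.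

Definition Cbeta (beta : 'I_N -> R) : op R d N :=
  fun y x => (d%:R / 'C(N + d - 1, N)%:R) * ((N + d - 1)%:R / N%:R)
             * Ctilde beta y x.

End Ops.

Arguments opmul {R d N} A B y x.
Arguments optr {R d N} A.
Arguments PiG {R d N} s y x.
Arguments omega0 {R d N} i y x.
Arguments Ctilde {R} d {N} beta y x.
Arguments Cbeta {R} d {N} beta y x.

(* Main.v *)
Require Import Defs.
From HB Require Import structures.
From mathcomp Require Import all_boot all_order all_algebra all_fingroup.
Import Order.TTheory GRing.Theory Num.Theory.
Set Implicit Arguments. Unset Strict Implicit. Unset Printing Implicit Defensive.
From mathcomp Require Import zify ring.
Section Comb.
Variables (T : finType) (d : nat).
Implicit Types (s h : {perm T}) (P : {set T}).

Definition Fix s : {set {ffun T -> 'I_d}} := [set x : {ffun T -> 'I_d} | [forall k, x (s k) == x k]].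
Definition Gs P : nat := \sum_(s | perm_on P s) #|Fix s|.
Definition upd (x : {ffun T -> 'I_d}) p c := [ffun k => if k == p then c else x k].

Lemma tperm_fix (x : {ffun T -> 'I_d}) p q : x p = x q -> forall z, x (tperm p q z) = x z.
Proof. by move=> e z; case: tpermP => [->|->|//]. Qed.

Lemma Fix_tperm s p q : s p = p ->
  Fix (s * tperm p q) = Fix s :&: [set x : {ffun T -> 'I_d} | x p == x q].
Proof.
move=> sp; apply/setP=> x; rewrite !inE.
apply/idP/idP.
- move/forallP=> H.
  have e : x p = x q.
    by have := H p; rewrite permM sp tpermL => /eqP ->.
  rewrite e eqxx andbT; apply/forallP=> k.
  by have := H k; rewrite permM tperm_fix.
- case/andP=> /forallP H /eqP e; apply/forallP=> k.
  by rewrite permM tperm_fix.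
Qed.

Lemma upd_Fix s x p c : s p = p -> x \in Fix s -> upd x p c \in Fix s.
Proof.
move=> sp; rewrite !inE => /forallP H; apply/forallP=> k; rewrite !ffunE.
case: (k =P p) => [->|/eqP kp]; first by rewrite sp eqxx.
have skp : s k != p by rewrite -{1}sp (inj_eq perm_inj).
by rewrite (negbTE skp) H.
Qed.

Lemma card_Fix_split s p q : s p = p -> p != q ->
  #|Fix s| = d * #|Fix s :&: [set x : {ffun T -> 'I_d} | x p == x q]|.
Proof.
move=> sp pq.
set A := Fix s :&: _.
pose F (x : {ffun T -> 'I_d}) := (x p, upd x p (x q)).
have Finj : injective F.
  move=> x y [e1 e2]; apply/ffunP=> k.
  have := congr1 (fun f : {ffun T -> 'I_d} => f k) e2; rewrite !ffunE.
  by case: eqP => [->|].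
rewrite -(card_imset _ Finj).
have -> : F @: Fix s = setX [set: 'I_d] A.
  apply/setP=> [[c z]]; rewrite !inE /=.
  apply/imsetP/idP.
  - case=> x xF [_ ->] /=.
    apply/andP; split; last by rewrite !ffunE eqxx; case: (q == p).
    by move: (upd_Fix (x q) sp xF); rewrite inE.
  - case/andP => zF /eqP ez.
    exists (upd z p c); first by apply: upd_Fix; rewrite // inE.
    rewrite /F !ffunE eqxx eq_sym (negbTE pq); congr pair.
    apply/ffunP=> k; rewrite !ffunE; case: (k =P p) => [->|//].
    by rewrite ez.
by rewrite cardsX cardsT card_ord.
Qed.

Lemma card_Fix_tperm s p q : s p = p -> p != q ->
  d * #|Fix (s * tperm p q)| = #|Fix s|.
Proof. by move=> sp pq; rewrite Fix_tperm // -card_Fix_split. Qed.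

Lemma perm_onP' P s : reflect (forall x, x \notin P -> s x = x) (perm_on P s).
Proof.
apply: (iffP subsetP) => H x.
- move=> xP; apply/eqP; apply/negPn; apply: contra xP; exact: H.
- rewrite inE; apply: contraR => xP; by rewrite H.
Qed.

Lemma sum_perm_on_at P p q (F : {perm T} -> nat) : p \in P -> q \in P -> p != q ->
  \sum_(s | perm_on P s && (s p == q)) F s =
  \sum_(s | perm_on (P :\ p) s) F (s * tperm p q)%g.
Proof.
move=> pP qP pq.
rewrite (reindex_inj (@mulIg _ (tperm p q))); apply: eq_bigl => h /=.
apply/idP/idP.
- case/andP=> /perm_onP' hon; rewrite permM => e.
  have hp : h p = p.
    by apply: (can_inj (tpermK p q)); rewrite (eqP e) tpermL.
  apply/perm_onP' => x; rewrite !inE negb_and negbK.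
  case/orP => [/eqP -> //|xP].
  have := hon x xP; rewrite permM => e2.
  have := congr1 (tperm p q) e2; rewrite tpermK => ->.
  rewrite tpermD //; apply: contraNneq xP => <- //.
- move/perm_onP' => hon.
  have hp : h p = p by apply: hon; rewrite !inE eqxx.
  rewrite permM hp tpermL eqxx andbT.
  apply/perm_onP' => x xP; rewrite permM hon; last by rewrite !inE negb_and xP orbT.
  rewrite tpermD //; apply: contraNneq xP => <- //.
Qed.

Lemma sum_perm_on_fix P p (F : {perm T} -> nat) :
  \sum_(s | perm_on P s && (s p == p)) F s = \sum_(s | perm_on (P :\ p) s) F s.
Proof.
apply: eq_bigl => h /=; apply/idP/idP.
- case/andP=> /perm_onP' hon /eqP hp; apply/perm_onP' => x.
  rewrite !inE negb_and negbK; case/orP => [/eqP -> //|]; exact: hon.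
- move/perm_onP' => hon.
  have hp : h p = p by apply: hon; rewrite !inE eqxx.
  rewrite hp eqxx andbT; apply/perm_onP' => x xP.
  by apply: hon; rewrite !inE negb_and xP orbT.
Qed.

Lemma Gs_rec P p : p \in P -> d * Gs P = (d + #|P|.-1) * Gs (P :\ p).
Proof.
move=> pP; rewrite /Gs (partition_big (fun s => s p) (mem P)) /=; last first.
  by move=> s son; rewrite perm_closed.
rewrite (bigD1 p) //= sum_perm_on_fix mulnDr mulnDl; congr (_ + _).
rewrite big_distrr /=.
rewrite (eq_bigr (fun _ => \sum_(s | perm_on (P :\ p) s) #|Fix s|)); last first.
  move=> q /andP[qP qp]; rewrite sum_perm_on_at // 1?eq_sym // big_distrr /=.
  apply: eq_bigr => s /perm_onP' son; apply: card_Fix_tperm; last by rewrite eq_sym.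
  by apply: son; rewrite !inE eqxx.
rewrite (eq_bigl (mem (P :\ p))); last by move=> q; rewrite !inE andbC.
by rewrite sum_nat_const (cardsD1 p P) pP.
Qed.

Lemma Gs_closed n : forall P, #|P| = n ->
  Gs P * d ^ n = d ^ #|T| * \prod_(k < n) (d + k).
Proof.
elim: n => [|n IH] P cP.
- have P0 : P = set0 by apply/eqP; rewrite -cards_eq0 cP.
  rewrite big_ord0 expn0 !muln1 /Gs P0.
  rewrite (big_pred1 1%g); last first.
    move=> s /=; apply/idP/eqP => [h|->]; last exact: perm_on1.
    by apply: (@perm_on_id T s set0 h); rewrite cards0.
  have -> : Fix 1 = setT by apply/setP=> x; rewrite !inE; apply/forallP=> k; rewrite perm1.
  by rewrite cardsT card_ffun card_ord.
- have [p pP] : exists p, p \in P by apply/set0Pn; rewrite -card_gt0 cP.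
  have cP' : #|P :\ p| = n by move: cP; rewrite (cardsD1 p) pP => [[]].
  have := Gs_rec pP; rewrite cP /= => e.
  rewrite expnS mulnA (mulnC (Gs P)) e -mulnA IH // big_ord_recr /=.
  ring.
Qed.

End Comb.
Local Open Scope ring_scope.

Lemma mul_if01 (R : fieldType) (b1 b2 : bool) :
  (if b1 then 1 else 0) * (if b2 then 1 else 0) = (if b1 && b2 then 1 else 0 : R).
Proof. by case: b1; case: b2; rewrite ?mulr1 ?mul0r ?mulr0. Qed.

Lemma PiG_E (R : fieldType) d N (s : {perm 'I_N.+1}) (a f : 'I_N.+1) (y z : basis d N) :
  s ord0 = a -> s f = ord0 -> a != ord0 ->
  PiG s y z = (if [&& y a == y ord0, z ord0 == z f &
     [forall k, (k != ord0) && (k != f) ==> (y (s k) == z k)]] then 1 else 0 : R).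
Proof.
move=> s0 sf a0.
have f0 : f != ord0 by apply/eqP => fe; move: a0; rewrite -s0 -{1}fe sf eqxx.
rewrite /PiG /Pi; congr (if _ then _ else _).
apply/forallP/and3P => [H|[h1 h2 /forallP h3] k].
- have := H ord0; rewrite s0 !ffunE (negbTE a0) eqxx => ->.
  have := H f; rewrite sf !ffunE eqxx (negbTE f0) => ->.
  split=> //; apply/forallP=> k; apply/implyP=> /andP[k0 kf].
  have := H k; rewrite !ffunE (negbTE k0).
  have sk0 : s k != ord0 by rewrite -sf (inj_eq perm_inj).
  by rewrite (negbTE sk0).
- rewrite !ffunE.
  case: (k =P ord0) => [->|/eqP k0]; first by rewrite s0 (negbTE a0).
  case: (k =P f) => [->|/eqP kf]; first by rewrite sf eqxx.
  have sk0 : s k != ord0 by rewrite -sf (inj_eq perm_inj).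
  rewrite (negbTE sk0).
  by have := h3 k; rewrite k0 kf.
Qed.

Lemma sum_if01 (R : fieldType) (T : finType) (P : pred T) :
  \sum_(z : T) (if P z then 1 else 0) = (#|P|)%:R :> R.
Proof. by rewrite -big_mkcond sumr_const. Qed.

Lemma sumz_eq (R : fieldType) d N (s : {perm 'I_N.+1}) (a f : 'I_N.+1) (y x : basis d N) :
  s ord0 = a -> s f = ord0 -> a != ord0 ->
  \sum_z PiG s y z * omega0 f z x = (d%:R * PiG s y x : R).
Proof.
move=> s0 sf a0.
have f0 : f != ord0 by apply/eqP => fe; move: a0; rewrite -s0 -{1}fe sf eqxx.
under eq_bigr => z _ do rewrite (PiG_E _ _ _ s0 sf a0) /omega0 mul_if01.
rewrite (PiG_E _ _ _ s0 sf a0).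
set Q := [&& _, _ & _].
pose g (c : 'I_d) : basis d N := [ffun k => if (k == ord0) || (k == f) then c else x k].
rewrite (eq_bigr (fun z : basis d N => if Q && (z == g (z ord0)) then 1 else 0)); last first.
  move=> z _; congr (if _ then _ else _).
  apply/idP/idP.
  - case/andP => /and3P[h1 h2 /forallP h3] /and3P[_ h5 /forallP h6].
    rewrite /Q h1 h5 /=; apply/andP; split.
    + apply/forallP=> k; apply/implyP => kk.
      by rewrite (eqP (implyP (h3 k) kk)) (implyP (h6 k) kk).
    + apply/eqP/ffunP => k; rewrite ffunE.
      case: ifP => [/orP[/eqP->|/eqP->]//|/negbT]; first by rewrite (eqP h2).
      by rewrite negb_or => kk; exact/eqP/(implyP (h6 k) kk).
  - case/andP => /and3P[q1 q2 /forallP q3] /eqP ez.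
    have zk : forall k, (k != ord0) && (k != f) -> z k = x k.
      by move=> k; rewrite -negb_or => /negbTE kk; rewrite ez ffunE kk.
    have zf : z f = z ord0 by rewrite {1}ez ffunE eqxx orbT.
    rewrite q1 zf eqxx q2 /=; apply/andP; split.
    + apply/forallP => k; apply/implyP => kk; rewrite zk //.
      exact: (implyP (q3 k) kk).
    + by apply/forallP => k; apply/implyP => kk; rewrite zk.
rewrite sum_if01.
have [qt|qf] := boolP Q; last first.
  by rewrite mulr0; rewrite eq_card0.
rewrite mulr1.
have ginj : injective g by move=> c c' /(congr1 (fun h : basis d N => h ord0)); rewrite !ffunE eqxx.
rewrite (@eq_card _ _ (g @: [set: 'I_d])); first by rewrite card_imset // cardsT card_ord.
move=> z; apply/idP/imsetP => [/eqP ez|[c _ ->]].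
  by exists (z ord0).
by rewrite unfold_in /= !ffunE eqxx.
Qed.

Lemma sumz_neq (R : fieldType) d N (s : {perm 'I_N.+1}) (a f i : 'I_N.+1) (y x : basis d N) :
  s ord0 = a -> s f = ord0 -> a != ord0 -> i != ord0 -> f != i ->
  \sum_z PiG s y z * omega0 i z x = (PiG (tperm f i * s)%g y x : R).
Proof.
move=> s0 sf a0 i0 fi.
have f0 : f != ord0 by apply/eqP => fe; move: a0; rewrite -s0 -{1}fe sf eqxx.
set t := tperm f i.
have t0 : t ord0 = ord0 by rewrite tpermD // eq_sym.
have tf : t f = i by rewrite tpermL.
have ti : t i = f by rewrite tpermR.
have tk : forall k, k != f -> k != i -> t k = k by move=> k kf ki; rewrite tpermD // eq_sym.
have s'0 : (t * s)%g ord0 = a by rewrite permM t0.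
have s'i : (t * s)%g i = ord0 by rewrite permM ti.
under eq_bigr => z _ do rewrite (PiG_E _ _ _ s0 sf a0) /omega0 mul_if01.
rewrite (PiG_E _ _ _ s'0 s'i a0).
set Q := [&& _, _ & _].
pose zz : basis d N := [ffun k => if k == ord0 then x f else if k == i then y (s i) else x k].
rewrite (eq_bigr (fun z : basis d N => if Q && (z == zz) then 1 else 0)); last first.
  move=> z _; congr (if _ then _ else _).
  apply/idP/idP.
  - case/andP => /and3P[h1 h2 /forallP h3] /and3P[h4 h5 /forallP h6].
    have zi : z i = y (s i) by rewrite (eqP (implyP (h3 i) _)) // i0 eq_sym fi.
    have zf : z f = x f by rewrite (eqP (implyP (h6 f) _)) // f0 fi.
    rewrite /Q h1 h5 /=; apply/andP; split.
    + apply/forallP=> k; apply/implyP => /andP[k0 ki]; rewrite permM.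
      case: (k =P f) => [->|/eqP kf].
        by rewrite tf -zi -(eqP h4) (eqP h2) zf.
      rewrite tk // (eqP (implyP (h3 k) _)) ?k0 ?kf //.
      by rewrite (implyP (h6 k)) ?k0 ?ki.
    + apply/eqP/ffunP => k; rewrite ffunE.
      case: (k =P ord0) => [->|/eqP k0]; first by rewrite (eqP h2).
      case: (k =P i) => [->|/eqP ki] //.
      by apply/eqP; rewrite (implyP (h6 k)) ?k0 ?ki.
  - case/andP => /and3P[q1 q2 /forallP q3] /eqP ez.
    have z0 : z ord0 = x f by rewrite ez ffunE eqxx.
    have zi : z i = y (s i) by rewrite ez ffunE eqxx (negbTE i0).
    have zk : forall k, k != ord0 -> k != i -> z k = x k.
      by move=> k k0 ki; rewrite ez ffunE (negbTE k0) (negbTE ki).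
    have zf : z f = x f by rewrite zk // f0.
    have qf : y (s i) = x f.
      by have := implyP (q3 f) (introT andP (conj f0 fi)); rewrite permM tf => /eqP.
    rewrite q1 z0 zf eqxx q2 zi qf eqxx /=; apply/andP; split.
    + apply/forallP => k; apply/implyP => /andP[k0 kf].
      case: (k =P i) => [->|/eqP ki]; first by rewrite zi.
      rewrite zk //; have := implyP (q3 k) (introT andP (conj k0 ki)).
      by rewrite permM tk.
    + by apply/forallP => k; apply/implyP => /andP[k0 ki]; rewrite zk.
have [qt|qf] := boolP Q.
  by rewrite (eq_bigr (fun z : basis d N => if z == zz then 1 else 0)) ?sum_if01 ?card1 // => z _; rewrite qt.
by rewrite big1 // => z _; rewrite (negbTE qf).
Qed.

Lemma trace_PiG (R : fieldType) d N (s : {perm 'I_N.+1}) :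
  \sum_(x : basis d N) PiG s x x = (#|Fix d s|)%:R :> R.
Proof.
rewrite (eq_bigr (fun x => if x \in Fix d s then 1 else 0)).
  by rewrite -big_mkcond sumr_const.
move=> x _.
rewrite /PiG /Pi.
have -> : set_fac0 x (x ord0) = x by apply/ffunP=> k; rewrite ffunE; case: eqP => [->|].
by rewrite inE.
Qed.

Section NatPart.
Local Open Scope nat_scope.
Variables (d N : nat) (i' : 'I_N.+1).
Hypothesis i0 : i' != ord0.

Definition Pset : {set 'I_N.+1} := [set~ ord0] :\ i'.

Lemma tperm_eq_l (T : finType) (u v w : T) : (tperm u v w == v) = (w == u).
Proof.
by apply/eqP/eqP => [e|->]; [apply: (can_inj (tpermK u v)); rewrite e tpermL|rewrite tpermL].
Qed.
Lemma tperm_eq_r (T : finType) (u v w : T) : (tperm u v w == u) = (w == v).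
Proof.
by apply/eqP/eqP => [e|->]; [apply: (can_inj (tpermK u v)); rewrite e tpermR|rewrite tpermR].
Qed.

Lemma Ti_eq : d * \sum_(s | inSigma s i' i') #|Fix d s| = Gs d Pset.
Proof.
rewrite big_distrr /= (reindex_inj (@mulIg _ (tperm ord0 i'))) /Gs.
apply: eq_big => h.
- rewrite /inSigma !permM tperm_eq_l tperm_eq_r.
  apply/andP/perm_onP' => [[/eqP h0 /eqP hi] x|hon].
    rewrite !inE negb_and !negbK => /orP[/eqP->//|/eqP->//].
  by split; apply/eqP; apply: hon; rewrite !inE eqxx ?andbF.
- rewrite /inSigma !permM tperm_eq_l => /andP[/eqP h0 _].
  by apply: card_Fix_tperm; rewrite // eq_sym.
Qed.

Lemma Ta_eq (a' : 'I_N.+1) : a' != ord0 -> a' != i' ->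
  d * (d * \sum_(s | inSigma s a' i') #|Fix d s|) = Gs d Pset.
Proof.
move=> a0 ai.
have -> : d * \sum_(s | inSigma s a' i') #|Fix d s| =
   \sum_(h | perm_on [set~ ord0] h && (h i' == a')) #|Fix d h|.
  rewrite big_distrr /= (reindex_inj (@mulIg _ (tperm ord0 a'))).
  apply: eq_big => h.
  - rewrite /inSigma !permM tperm_eq_l tperm_eq_r; congr andb.
    apply/eqP/perm_onP' => [h0 x|hon].
      by rewrite !inE negbK => /eqP->.
    by apply: hon; rewrite !inE eqxx.
  - rewrite /inSigma !permM tperm_eq_l => /andP[/eqP h0 _].
    by apply: card_Fix_tperm; rewrite // eq_sym.
rewrite sum_perm_on_at; last 3 first.
- by rewrite !inE.
- by rewrite !inE.
- by rewrite eq_sym.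
rewrite big_distrr /=.
apply: eq_bigr => h /perm_onP' hon; apply: card_Fix_tperm; last by rewrite eq_sym.
by apply: hon; rewrite !inE eqxx.
Qed.

Lemma card_Pset : #|Pset| = N.-1.
Proof.
have e := cardsD1 i' [set~ (ord0 : 'I_N.+1)].
rewrite cardsC1 card_ord !inE i0 /= in e.
by rewrite /Pset [in RHS]e.
Qed.

Lemma Gs_Pset : 0 < d -> Gs d Pset = d * d * \prod_(k < N.-1) (d + k).
Proof.
move=> d0; have e := Gs_closed d card_Pset.
set m := #|'I_N.+1| in e.
have em : m = 2 + N.-1.
  rewrite /m card_ord; case: (N) i' i0 => [|n] j //=.
  by case: j => [[]].
rewrite em expnD in e.
apply/eqP; rewrite -(@eqn_pmul2r (d ^ N.-1)); last by rewrite expn_gt0 d0.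
apply/eqP.
rewrite e; ring.
Qed.

End NatPart.

Section Arith.
Local Open Scope nat_scope.
Lemma fact_prod d' m : (d' + m)`! = d'`! * \prod_(k < m) (d'.+1 + k).
Proof.
elim: m => [|m IH]; first by rewrite addn0 big_ord0 muln1.
rewrite addnS factS IH big_ord_recr /= addSn; ring.
Qed.

Lemma arith d N : 0 < d -> 0 < N ->
  (N + d - 1) * \prod_(k < N.-1) (d + k) = 'C(N + d - 1, N) * N`!.
Proof.
case: d => // d' _; case: N => // n _.
have -> : n.+1 + d'.+1 - 1 = n.+1 + d' by rewrite addnS subn1.
apply/eqP; rewrite -(@eqn_pmul2r d'`!) ?fact_gt0 //; apply/eqP.
have := bin_fact (leq_addr d' n.+1); rewrite addKn => e.
rewrite -[RHS]mulnA e addnC fact_prod big_ord_recr /= addSn addnC; ring.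
Qed.
End Arith.

Lemma reindex_Sigma (R : fieldType) N (a b i : 'I_N.+1) (G : {perm 'I_N.+1} -> R) :
  b != ord0 -> i != ord0 ->
  \sum_(s | inSigma s a b) G (tperm b i * s)%g = \sum_(s | inSigma s a i) G s.
Proof.
move=> b0 i0; rewrite [RHS](reindex_inj (@mulgI _ (tperm b i))) /=.
by apply: eq_bigl => s; rewrite /inSigma !permM tpermR tpermD.
Qed.

Lemma fac0 N (i : 'I_N) : fac i != ord0.
Proof. by rewrite /fac eq_sym neq_lift. Qed.

Lemma fac_eq N (a b : 'I_N) : (fac a == fac b) = (a == b).
Proof. by rewrite /fac (inj_eq (@lift_inj _ ord0)). Qed.

Lemma part1 (R : fieldType) (d N : nat) (beta : 'I_N -> R) (i : 'I_N) (y x : basis d N) :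
  opmul (Ctilde d beta) (omega0 (fac i)) y x =
  \sum_(a < N) \sum_(s : {perm 'I_N.+1} | inSigma s (fac a) (fac i))
    ((N.-1)`!%:R)^-1 *
    (beta a * ((d%:R - 1) * beta i + \sum_(b < N) beta b)) * PiG s y x.
Proof.
set F := ((N.-1)`!%:R : R).
rewrite /opmul /Ctilde.
have step : forall z, (\sum_(a < N) \sum_(b < N) \sum_(s | inSigma s (fac a) (fac b))
     (beta a * beta b / F) * PiG s y z) * omega0 (fac i) z x =
   \sum_(a < N) \sum_(b < N) \sum_(s | inSigma s (fac a) (fac b))
     (beta a * beta b / F) * (PiG s y z * omega0 (fac i) z x).
  move=> z; rewrite mulr_suml; apply: eq_bigr => a _; rewrite mulr_suml.
  apply: eq_bigr => b _; rewrite mulr_suml; apply: eq_bigr => s _; by rewrite mulrA.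
rewrite (eq_bigr _ (fun z _ => step z)) exchange_big; apply: eq_bigr => a _ /=.
rewrite exchange_big /=.
rewrite (eq_bigr (fun b => \sum_(s | inSigma s (fac a) (fac b))
   (beta a * beta b / F) * \sum_z (PiG s y z * omega0 (fac i) z x))); last first.
  by move=> b _; rewrite exchange_big; apply: eq_bigr => s _; rewrite mulr_sumr.
rewrite (bigD1 i) //=.
rewrite (eq_bigr (fun s => (beta a * beta i / F) * (d%:R * PiG s y x))); last first.
  move=> s /andP[/eqP s0 /eqP si]; congr (_ * _).
  by apply: sumz_eq s0 si (fac0 a).
rewrite (eq_bigr (fun b => \sum_(s | inSigma s (fac a) (fac i))
   (beta a * beta b / F) * PiG s y x)); last first.
  move=> b bi.
  rewrite (eq_bigr (fun s => (beta a * beta b / F) * PiG (tperm (fac b) (fac i) * s)%g y x)).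
    exact: (reindex_Sigma (fac a) (fun s => (beta a * beta b / F) * PiG s y x) (fac0 b) (fac0 i)).
  move=> s /andP[/eqP s0 /eqP sb]; congr (_ * _).
  apply: sumz_neq s0 sb (fac0 a) (fac0 i) _.
  by rewrite /fac (inj_eq (@lift_inj _ ord0)).
rewrite exchange_big -big_split /=; apply: eq_bigr => s _.
rewrite -mulr_suml [in RHS](bigD1 i) //=.
have -> : \sum_(b < N | b != i) beta a * beta b / F =
  beta a * (\sum_(b < N | b != i) beta b) / F by rewrite mulr_sumr mulr_suml.
ring.
Qed.

Unset Implicit Arguments.
Theorem mainTheorem14 (R : realFieldType) (d N : nat) (beta : 'I_N -> R) :
  (2 <= d)%N -> (1 <= N)%N ->
  (d%:R - 1) * (\sum_(i < N) beta i ^+ 2) + (\sum_(i < N) beta i) ^+ 2 = 1 ->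
  forall i : 'I_N,
    (forall y x : basis d N,
       opmul (Ctilde d beta) (omega0 (fac i)) y x =
       \sum_(a < N) \sum_(s : {perm 'I_N.+1} | inSigma s (fac a) (fac i))
          ((N.-1)`!%:R)^-1 *
          (beta a * ((d%:R - 1) * beta i + \sum_(b < N) beta b)) * PiG s y x)
    /\
    optr (opmul (Cbeta d beta) (omega0 (fac i))) =
      d%:R * ((d%:R - 1) * beta i + \sum_(j < N) beta j) ^+ 2.
Proof.
move=> d2 N1 _ i; split; first by move=> y x; exact: part1.
set F := ((N.-1)`!%:R : R).
set E := (d%:R - 1) * beta i + \sum_(j < N) beta j.
pose Tn (a : 'I_N) := (\sum_(s | inSigma s (fac a) (fac i)) #|Fix d s|)%N.
pose Pi := (\prod_(k < N.-1) (d + k))%N.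
have d0 : (0 < d)%N by apply: leq_trans d2.
have GP := Gs_Pset (fac0 i) d0.
have Ti : Tn i = (d * Pi)%N.
  apply/eqP; rewrite -(@eqn_pmul2l d) //; apply/eqP.
  by rewrite /Tn Ti_eq ?fac0 // GP mulnA.
have Ta : forall a, a != i -> Tn a = Pi.
  move=> a ai; apply/eqP; rewrite -(@eqn_pmul2l (d * d)) ?muln_gt0 ?d0 //; apply/eqP.
  by rewrite -mulnA /Tn Ta_eq ?fac0 ?GP // fac_eq.
set kap := d%:R / 'C(N + d - 1, N)%:R * ((N + d - 1)%N%:R / N%:R) : R.
have e1 : forall x, opmul (Cbeta d beta) (omega0 (fac i)) x x =
   kap * opmul (Ctilde d beta) (omega0 (fac i)) x x.
  move=> x; rewrite /opmul mulr_sumr; apply: eq_bigr => z _; rewrite /Cbeta /kap; ring.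
rewrite /optr (eq_bigr _ (fun x _ => e1 x)) -mulr_sumr.
under eq_bigr => x _ do rewrite part1.
rewrite exchange_big /=.
rewrite (eq_bigr (fun a => F^-1 * (beta a * E) * (Tn a)%:R)); last first.
  move=> a _; rewrite exchange_big /= natr_sum mulr_sumr; apply: eq_bigr => s _.
  by rewrite -mulr_sumr trace_PiG.
rewrite (bigD1 i) //= Ti.
rewrite (eq_bigr (fun a => F^-1 * (beta a * E) * Pi%:R)); last by move=> a ai; rewrite Ta.
rewrite -mulr_suml.
have -> : \sum_(a < N | a != i) F^-1 * (beta a * E) =
  F^-1 * (\sum_(a < N | a != i) beta a) * E.
  by rewrite -mulrA mulr_suml mulr_sumr.
have hC : ('C(N + d - 1, N)%:R : R) != 0.
  by rewrite pnatr_eq0 -lt0n bin_gt0 -addnBA ?leq_addr // ltnW.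
have hN : (N%:R : R) != 0 by rewrite pnatr_eq0 -lt0n.
have hF : F != 0 by rewrite pnatr_eq0 -lt0n fact_gt0.
have hA : ((N + d - 1)%N%:R * Pi%:R = 'C(N + d - 1, N)%:R * N%:R * F :> R).
  rewrite -!natrM arith //.
  by case: (N) N1 => // n _; rewrite factS mulnA.
have key : kap * (Pi%:R * F^-1) = d%:R.
  transitivity (d%:R * ((N + d - 1)%N%:R * Pi%:R) / ('C(N + d - 1, N)%:R * N%:R * F)).
    by rewrite /kap; field; rewrite -/F hF hN hC.
  by rewrite hA; field; rewrite -/F hF hN hC.
transitivity (kap * (Pi%:R * F^-1) * E ^+ 2); last by rewrite key.
rewrite /E (bigD1 i) //=.
ring.
Qed.
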